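(* Let $f$ be a function of unitation on $\{0,1\}^n$, and let $\sigma=1$, $\kappa\in\mathbb{N}$ and $\mu\geq (n+1)\cdot\kappa$. Then the expected time (number of generations) for the $(\mu+1)$ EA with phenotypic clearing with clearing radius $\sigma$, niche capacity $\kappa$ and population size $\mu$ on $f$ to find the search points $0^n$ and $1^n$ is $O(\mu n\log n)$.
   Context: A function of unitation is $f:\{0,1\}^n\to\mathbb{R}$ with $f(x)=u(|x|_1)$ for some $u:\{0,\dots,n\}\to\mathbb{R}^+$, where $|x|_1$ is the number of 1-bits of $x$; fitness values are assumed positive. The $(\mu+1)$ EA with clearing (population size $\mu$, clearing radius $\sigma$, niche capacity $\kappa$, distance function $\mathrm{d}$): $P_0$ consists of $\mu$ bit strings chosen independently and uniformly at random. In generation $t$: choose a parent $x\in P_t$ uniformly at random; create $y$ by flipping each bit of $x$ independently with probability $1/n$; let $P_t^*=P_t\cup\{y\}$; update the fitness values of $P_t^*$ by the clearing procedure: sort $P_t^*$ by decreasing fitness; for $i=1,\dots,|P_t^*|$, if the current fitness of $P[i]$ is positive, set $w:=1$ and for $j=i+1,\dots,|P_t^*|$: if the current fitness of $P[j]$ is positive and $\mathrm{d}(P[i],P[j])<\sigma$ then, if $w<\kappa$ set $w:=w+1$, else set the fitness of $P[j]$ to $0$. Individuals whose fitness is not reset are winners, the others are cleared. Then choose $z\in P_t$ with worst (cleared) fitness uniformly at random; if the (cleared) fitness of $y$ is at least that of $z$, set $P_{t+1}=P_t^*\setminus\{z\}$, otherwise $P_{t+1}=P_t^*\setminus\{y\}$.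 Phenotypic clearing uses $\mathrm{d}(x,y)=\big||x|_1-|y|_1\big|$. *)

(* Defs.v *)
From HB Require Import structures.
From mathcomp Require Import all_boot all_order all_algebra.
From mathcomp Require Import reals exp.
Set Implicit Arguments. Unset Strict Implicit. Unset Printing Implicit Defensive.
Import Order.TTheory GRing.Theory Num.Theory.
Local Open Scope ring_scope.

Definition bits (n : nat) := {ffun 'I_n -> bool}.
Definition pop (mu n : nat) := {ffun 'I_mu -> bits n}.

Definition ones n (x : bits n) : nat := #|[pred i | x i]|.
Definition zeros_str n : bits n := [ffun => false].
Definition ones_str n : bits n := [ffun => true].

Definition hamming n (x y : bits n) : nat := #|[pred i | x i != y i]|.

Definition pheno_dist n (x y : bits n) : nat :=
  ((ones x - ones y) + (ones y - ones x))%N.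

Section Process.
Variable R : realType.

Definition mut_prob n (x y : bits n) : R :=
  (n%:R^-1) ^+ (hamming x y) * (1 - n%:R^-1) ^+ (n - hamming x y).

(* Clearing procedure, implemented literally.  [s] is the population
   P_t^* sorted by decreasing fitness (a permutation of its indices),
   [cf] the current fitness values, [dist] the distance, [sigma] the
   clearing radius and [kappa] the niche capacity. *)
Section Clearing.
Variables (m : nat) (dist : 'I_m -> 'I_m -> nat) (sigma kappa : nat).

Definition reset (cf : 'I_m -> R) (k : 'I_m) : 'I_m -> R :=
  fun l => if l == k then 0 else cf l.

Fixpoint clear_inner (x : 'I_m) (rest : seq 'I_m) (w : nat) (cf : 'I_m -> R)
  : 'I_m -> R :=
  match rest with
  | [::] => cf
  | y :: r =>
      if (0 < cf y) && (dist x y < sigma)%N then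
        if (w < kappa)%N then clear_inner x r w.+1 cf
        else clear_inner x r w (reset cf y)
      else clear_inner x r w cf
  end.

Fixpoint clear_outer (s : seq 'I_m) (cf : 'I_m -> R) : 'I_m -> R :=
  match s with
  | [::] => cf
  | x :: r => clear_outer r (if 0 < cf x then clear_inner x r 1 cf else cf)
  end.
End Clearing.

Section EA.
Variables (n mu kappa : nat) (u : nat -> R).

Definition fit (x : bits n) : R := u (ones x).

(* A tie-breaking rule: for every extended population P^* (indexed by
   'I_mu.+1), an ordering of its indices sorted by decreasing fitness. *)
Definition sort_rule := {ffun 'I_mu.+1 -> bits n} -> seq 'I_mu.+1.

Definition valid_sort_rule (tb : sort_rule) : Prop :=
  forall Q : {ffun 'I_mu.+1 -> bits n},
    perm_eq (tb Q) (enum 'I_mu.+1) /\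
    sorted (fun a b => fit (Q b) <= fit (Q a)) (tb Q).

Variable tb : sort_rule.

(* P_t^* = P_t \cup {y}; the offspring y has index ord_max. *)
Definition pstar (P : pop mu n) (y : bits n) : {ffun 'I_mu.+1 -> bits n} :=
  [ffun k => if unlift ord_max k is Some i then P i else y].

Definition cleared (P : pop mu n) (y : bits n) : 'I_mu.+1 -> R :=
  let Q := pstar P y in
  clear_outer (fun k l => pheno_dist (Q k) (Q l)) 1 kappa (tb Q)
              (fun k => fit (Q k)).

Definition worst (P : pop mu n) (y : bits n) : {set 'I_mu} :=
  [set i : 'I_mu | [forall j : 'I_mu,
     cleared P y (lift ord_max i) <= cleared P y (lift ord_max j)]].

Definition next_pop (P : pop mu n) (y : bits n) (z : 'I_mu) : pop mu n :=
  if cleared P y (lift ord_max z) <= cleared P y ord_max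
  then [ffun i => if i == z then y else P i]
  else P.

Definition trans (P Q : pop mu n) : R :=
  \sum_(i : 'I_mu) \sum_(y : bits n)
    mu%:R^-1 * mut_prob (P i) y *
    \sum_(z in worst P y) (#|worst P y|%:R^-1 * (next_pop P y z == Q)%:R).

(* P_0: mu bit strings chosen independently and uniformly at random *)
Definition init_prob (P : pop mu n) : R := (#|{: pop mu n}|%:R)^-1.

Definition target (P : pop mu n) : bool :=
  [exists i, P i == zeros_str n] && [exists i, P i == ones_str n].

(* surv t P = Pr[P_0, ..., P_t all miss the target and P_t = P] *)
Fixpoint surv (t : nat) (Q : pop mu n) : R :=
  if target Q then 0 else
  match t with
  | 0 => init_prob Q
  | t'.+1 => \sum_(P : pop mu n) surv t' P * trans P Q
  end.

(* Pr[tau > t], tau = first generation t with P_t containing 0^n and 1^n *)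
Definition prob_not_yet (t : nat) : R := \sum_(P : pop mu n) surv t P.

(* partial sums of E[tau] = sum_{t >= 0} Pr[tau > t] *)
Definition exp_time_partial (T : nat) : R := \sum_(t < T) prob_not_yet t.

End EA.
End Process.

(* Main.v *)
Require Import Defs.
From HB Require Import structures.
From mathcomp Require Import all_boot all_order all_algebra.
From mathcomp Require Import reals exp sequences.
From mathcomp Require Import ring lra zify.
Import Order.TTheory GRing.Theory Num.Theory.
Local Open Scope ring_scope.

Section Reals.
Variable R : realType.

Lemma ln_ge1V (x : R) : 0 < x -> 1 - x^-1 <= ln x.
Proof.
move=> x0.
have h := @le_ln1Dx R (x^-1 - 1).
have xi : 0 < x^-1 by rewrite invr_gt0.
have : -1 < x^-1 - 1 by lra.
move/h; rewrite addrC subrK lnV ?posrE //; lra.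
Qed.

Lemma harm_le (n : nat) : (0 < n)%N ->
  \sum_(j < n) ((j.+1)%:R : R)^-1 <= 1 + ln (n%:R : R).
Proof.
elim: n => [//|n IH] _.
rewrite big_ord_recr /=.
case: n IH => [|n] IH.
  by rewrite big_ord0 ln1 add0r addr0 invr1.
have {}IH := IH isT.
have h := @ln_ge1V ((n.+2)%:R / (n.+1)%:R).
rewrite ln_div ?posrE ?ltr0n // in h.
have e : 1 - ((n.+2)%:R / (n.+1)%:R)^-1 = ((n.+2)%:R : R)^-1.
  rewrite invf_div. field. apply/negP => /eqP; have := ler0n R n; lra.
rewrite e in h.
have : 0 < (n.+2)%:R / ((n.+1)%:R : R) by rewrite divr_gt0 ?ltr0n.
move/h => {}h. apply: le_trans (lerD IH h) _. lra.
Qed.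
Lemma pow_ge_expN1 (n : nat) : (2 <= n)%N ->
  expR (-1) <= (1 - (n%:R : R)^-1) ^+ n.-1.
Proof.
case: n => [|[|k]] // _ /=.
set x : R := 1 - _.
have e : x = (k.+1)%:R / (k.+2)%:R.
  rewrite /x; field. apply/negP => /eqP; have := ler0n R k; lra.
have x0 : 0 < x by rewrite e divr_gt0 ?ltr0n.
have h := @ln_ge1V x x0.
have e2 : 1 - x^-1 = - ((k.+1)%:R)^-1.
  rewrite e invf_div; field. apply/negP => /eqP; have := ler0n R k; lra.
rewrite e2 in h.
have : -1 <= ln (x ^+ k.+1).
  rewrite lnXn // -mulr_natr.
  have := ler_pM2r (ltr0n R (k.+1)) .
  move=> _. 
  have hk : 0 < (k.+1)%:R :> R by rewrite ltr0n.
  have := ler_wpM2r (ltW hk) h.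
  rewrite mulNr mulVf ?lt0r_neq0 //.
move=> H; rewrite -[X in _ <= X](@lnK _ (x ^+ k.+1)) ?posrE ?exprn_gt0 // ler_expR.
exact: H.
Qed.
End Reals.

Section Mut.
Variables (R : realType) (n : nat).
Local Notation p := ((n%:R : R)^-1).

Lemma p_ge0 : 0 <= p. Proof. by rewrite invr_ge0 ler0n. Qed.
Lemma p_le1 : p <= 1.
Proof. case: n => [|k]; first by rewrite invr0 ler01. by rewrite invf_le1 ?ler1n ?ltr0n. Qed.

Lemma mut_prod (x y : bits n) :
  mut_prob R x y = \prod_i (if y i != x i then p else 1 - p).
Proof.
rewrite /mut_prob /hamming (bigID (fun i => y i != x i)) /=.
rewrite (eq_bigr (fun _ => p)); last by move=> i ->.
rewrite [X in _ = _ * X](eq_bigr (fun _ => 1 - p)); last by move=> i /negbTE ->.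
rewrite !prodr_const.
congr (_ ^+ _ * _ ^+ _).
  by apply: eq_card => i; rewrite !inE eq_sym.
apply/eqP; rewrite -(eqn_add2l #|[pred i | x i != y i]|) subnKC; last first.
  by apply: leq_trans (max_card _) _; rewrite card_ord.
rewrite -[X in X == _](card_ord n) -(cardC [pred i | x i != y i]).
apply/eqP; congr addn; apply: eq_card => i; by rewrite !inE eq_sym.
Qed.

Lemma mut_ge0 (x y : bits n) : 0 <= mut_prob R x y.
Proof.
rewrite /mut_prob; apply: mulr_ge0; apply: exprn_ge0; first exact: p_ge0.
by rewrite subr_ge0 p_le1.
Qed.

Lemma mut_sum1 (x : bits n) : \sum_(y : bits n) mut_prob R x y = 1.
Proof.
rewrite (eq_bigr (fun y : bits n => \prod_i (fun i b => if b != x i then p else 1 - p) i (y i)));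
  last by move=> y _; rewrite mut_prod.
rewrite -(bigA_distr_bigA (fun i b => if b != x i then p else 1 - p)) /=.
apply: big1 => i _; rewrite big_bool /=.
by case: (x i) => /=; lra.
Qed.

Definition flip (x : bits n) (j : 'I_n) : bits n :=
  [ffun i => if i == j then ~~ x i else x i].

Lemma hamming_flip x j : hamming x (flip x j) = 1%N.
Proof.
rewrite /hamming -(card1 j); apply: eq_card => i; rewrite !inE ffunE.
by case: (i == j); case: (x i).
Qed.

Lemma mut_flip x j : mut_prob R x (flip x j) = p * (1 - p) ^+ n.-1.
Proof. by rewrite /mut_prob hamming_flip expr1 subn1. Qed.

Lemma flip_inj x : injective (flip x).
Proof.
move=> j j' e; apply/eqP; apply/negPn/negP => nj.
have := congr1 (fun f : bits n => f j) e; rewrite !ffunE eqxx (negbTE nj).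
by case: (x j).
Qed.

Lemma ones_flip1 (x : bits n) (j : 'I_n) : x j -> (ones (flip x j)).+1 = ones x.
Proof.
move=> xj; rewrite /ones [X in _ = X](cardD1 j) !inE xj /= add1n; congr _.+1.
apply: eq_card => i; rewrite !inE ffunE.
by case: eqP => [->|]; rewrite ?xj.
Qed.

Lemma ones_flip0 (x : bits n) (j : 'I_n) : ~~ x j -> ones (flip x j) = (ones x).+1.
Proof.
move=> xj; rewrite /ones [X in X = _](cardD1 j) !inE ffunE eqxx xj /= add1n; congr _.+1.
apply: eq_card => i; rewrite !inE ffunE.
by case: eqP => [->|]; rewrite ?(negbTE xj) ?andbF.
Qed.

Lemma mut_lb x (S : {set 'I_n}) (D : bits n -> R) (c : R) :
  (forall y, 0 <= D y) -> (forall j, j \in S -> c <= D (flip x j)) ->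
  #|S|%:R * (p * (1 - p) ^+ n.-1) * c <= \sum_(y : bits n) mut_prob R x y * D y.
Proof.
move=> D0 Dc.
have q0 : 0 <= p * (1 - p) ^+ n.-1.
  by apply: mulr_ge0; [exact: p_ge0|apply: exprn_ge0; rewrite subr_ge0 p_le1].
rewrite (bigID (fun y => y \in flip x @: S)) /=.
set s2 := (X in _ <= _ + X).
have h2 : 0 <= s2 by apply: sumr_ge0 => y _; rewrite mulr_ge0 ?mut_ge0.
apply: le_trans (_ : _ <= \sum_(y in flip x @: S) mut_prob R x y * D y) _; last first.
  by rewrite lerDl.
rewrite big_imset /=; last by move=> a b _ _; exact: flip_inj.
apply: le_trans (_ : _ <= \sum_(j in S) (p * (1 - p) ^+ n.-1 * c)) _.
  by rewrite sumr_const -[X in _ <= X]mulr_natl !mulrA.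
apply: ler_sum => j jS; rewrite mut_flip; exact: ler_wpM2l (Dc j jS).
Qed.
End Mut.
Section Clr.
Variables (R : realType) (m : nat) (dist : 'I_m -> 'I_m -> nat) (sigma kappa : nat).
Notation CI := (@clear_inner R m dist sigma kappa).
Notation CO := (@clear_outer R m dist sigma kappa).

Lemma CI_val x r w cf l : CI x r w cf l = cf l \/ CI x r w cf l = 0.
Proof.
elim: r w cf => [|y r IH] w cf /=; first by left.
case: ifP => _; [case: ifP => _|]; try exact: IH.
have [->|->] := IH w (reset cf y); last by right.
rewrite /reset; case: eqP; by [right|left].
Qed.

Lemma CI_notin x r w cf l : l \notin r -> CI x r w cf l = cf l.
Proof.
elim: r w cf => [|y r IH] w cf //=.
rewrite in_cons negb_or => /andP[ly lr].
case: ifP => _; [case: ifP => _|]; rewrite IH //.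
by rewrite /reset (negbTE ly).
Qed.

Lemma CI_far x r w cf l : ~~ (dist x l < sigma)%N -> CI x r w cf l = cf l.
Proof.
move=> hl; elim: r w cf => [|y r IH] w cf //=.
case: ifP => hy; [case: ifP => _|]; rewrite IH //.
rewrite /reset; case: eqP => // ely.
by move: hy; rewrite -ely (negbTE hl) andbF.
Qed.

Lemma CO_val s cf l : CO s cf l = cf l \/ CO s cf l = 0.
Proof.
elim: s cf => [|a s IH] cf /=; first by left.
set cf' := (if _ then _ else _).
have [->|->] := IH cf'; last by right.
rewrite /cf'; case: ifP => _; [exact: CI_val|by left].
Qed.

Lemma CO_notin s cf l : l \notin s -> CO s cf l = cf l.
Proof.
elim: s cf => [|a s IH] cf //=.
rewrite in_cons negb_or => /andP[la ls].
rewrite IH //; case: ifP => _ //; exact: CI_notin.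
Qed.

Lemma CI_count x r w cf : uniq r -> (w <= kappa)%N ->
  (count (fun l => (dist x l < sigma)%N && (0 < CI x r w cf l)%R) r <= kappa - w)%N.
Proof.
elim: r w cf => [|y r IH] w cf //= /andP[yr ur] wk.
case: ifP => hy.
  case: ifP => hw.
    rewrite CI_notin // (andP hy).2 (andP hy).1 /=.
    have := IH w.+1 cf ur hw. lia.
  have wk' : w = kappa by apply/eqP; rewrite eqn_leq wk leqNgt hw.
  rewrite CI_notin // /reset eqxx ltxx andbF add0n.
  exact: IH.
rewrite CI_notin //.
have -> : (dist x y < sigma)%N && (0 < cf y) = false by rewrite andbC.
exact: IH.
Qed.

Variable lev : 'I_m -> nat.
Hypothesis hd : forall a b, (dist a b < sigma)%N = (lev a == lev b).

Lemma CO_count s cf k : uniq s -> (0 < kappa)%N ->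
  (count (fun l => (lev l == k) && (0 < CO s cf l)%R) s <= kappa)%N.
Proof.
move=> + k0; elim: s cf => [|a s IH] cf //= /andP[as_ us].
set cf' := (if _ then _ else _).
rewrite CO_notin //.
case: (eqVneq (lev a) k) => [eak|nak]; last first.
  exact: IH.
case ha: (0 < cf a)%R; last first.
  by rewrite /cf' ha ha add0n; apply: IH.
have c1 : (count (fun l => (lev l == k) && (0 < CO s cf' l)%R) s <=
          count (fun l => (dist a l < sigma)%N && (0 < cf' l)%R) s)%N.
  apply: sub_count => l /andP[lk lp]; rewrite hd eak eq_sym lk /=.
  by have [<-|e] := CO_val s cf' l; rewrite // e ltxx in lp.
have c2 := CI_count a s 1 cf us k0.
move: c1; rewrite /cf' ha => c1.
lia.
Qed.

Lemma CO_winner s cf k : uniq s -> has (fun l => lev l == k) s ->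
  (forall l, lev l = k -> 0 < cf l) ->
  exists x, [/\ x \in s, lev x = k & 0 < CO s cf x].
Proof.
elim: s cf => [|a s IH] cf //= /andP[as_ us] hs hp.
set cf' := (if _ then _ else _).
case: (eqVneq (lev a) k) => [eak|nak].
  exists a; split => //; first by rewrite inE eqxx.
  rewrite CO_notin // /cf'.
  have ha := hp a eak; rewrite ha CI_notin //.
move: hs; rewrite (negbTE nak) /= => hs.
have [|x [xs xk xp]] := IH cf' us hs.
  move=> l lk; rewrite /cf'; case: ifP => _; last exact: hp.
  rewrite CI_far ?hd ?lk //; exact: hp.
by exists x; split => //; rewrite inE xs orbT.
Qed.
End Clr.

Lemma card_count (m : nat) (s : seq 'I_m) (p : pred 'I_m) :
  perm_eq s (enum 'I_m) -> #|p| = count p s.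
Proof.
move/permP => ->; rewrite cardE /enum_mem -size_filter -filter_predI.
congr size; apply: eq_filter => x; by rewrite /= !inE andbT.
Qed.

Section EA1.
Variables (R : realType) (n mu kappa : nat) (u : nat -> R) (tb : sort_rule n mu).
Hypothesis hu : forall i, (i <= n)%N -> 0 < u i.
Hypothesis hk : (0 < kappa)%N.
Hypothesis htb : valid_sort_rule u tb.
Notation CL := (cleared kappa u tb).
Implicit Types (P : pop mu n) (y : bits n).

Lemma ones_le (x : bits n) : (ones x <= n)%N.
Proof. by rewrite /ones; apply: leq_trans (max_card _) _; rewrite card_ord. Qed.

Lemma fit_pos (x : bits n) : 0 < fit u x.
Proof. exact: hu (ones_le x). Qed.

Lemma pstar_lift P y i : pstar P y (lift ord_max i) = P i.
Proof. by rewrite /pstar ffunE liftK. Qed.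

Lemma pstar_max P y : pstar P y ord_max = y.
Proof. by rewrite /pstar ffunE unlift_none. Qed.

Lemma hd_pheno (Q : {ffun 'I_mu.+1 -> bits n}) a b :
  (pheno_dist (Q a) (Q b) < 1)%N = (ones (Q a) == ones (Q b)).
Proof. by rewrite /pheno_dist ltnS leqn0 addn_eq0 !subn_eq0 -eqn_leq. Qed.

Lemma CL_val P y l : CL P y l = fit u (pstar P y l) \/ CL P y l = 0.
Proof. exact: CO_val. Qed.

Lemma CL_ge0 P y l : 0 <= CL P y l.
Proof. by have [->|->] := CL_val P y l; [apply: ltW; apply: fit_pos|]. Qed.

Lemma CL_count P y k :
  (#|[pred l | (ones (pstar P y l) == k) && (0 < CL P y l)%R]| <= kappa)%N.
Proof.
have [hp _] := htb (pstar P y).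
rewrite (@card_count _ _ _ hp).
apply: (@CO_count R _ _ 1 kappa (fun l => ones (pstar P y l))) => //.
  by move=> a b; exact: hd_pheno.
by rewrite (perm_uniq hp) enum_uniq.
Qed.

Lemma CL_winner P y k : (exists l, ones (pstar P y l) = k) ->
  exists x, ones (pstar P y x) = k /\ 0 < CL P y x.
Proof.
move=> [l hl].
have [hp _] := htb (pstar P y).
have [|||x [_ xk xp]] := @CO_winner R _ _ 1 kappa (fun l => ones (pstar P y l))
   (fun a b => hd_pheno (pstar P y) a b)
   (tb (pstar P y)) (fun k => fit u (pstar P y k)) k.
- by rewrite (perm_uniq hp) enum_uniq.
- by apply/hasP; exists l; rewrite ?(perm_mem hp) ?mem_enum ?hl.
- move=> l' _; exact: fit_pos.
by exists x.
Qed.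

Lemma ones0 (x : bits n) : ones x = 0%N -> x = zeros_str n.
Proof.
move/card0_eq => h; apply/ffunP => i; rewrite ffunE.
by have := h i; rewrite !inE /= => ->.
Qed.

Lemma onesn (x : bits n) : ones x = n -> x = ones_str n.
Proof.
move=> h; apply/ffunP => i; rewrite ffunE.
have hc := cardC [pred i | x i]; rewrite card_ord -/(ones x) h in hc.
have /card0_eq h0 : #|[predC [pred i | x i]]| = 0%N by apply/eqP; rewrite -(eqn_add2l n) addn0 hc.
by have := h0 i; rewrite !inE /= => /negbFE.
Qed.

Lemma not_target_lev P : ~~ target P ->
  (forall i, ones (P i) != 0%N) \/ (forall i, ones (P i) != n).
Proof.
rewrite /target negb_and !negb_exists => /orP[/forallP h|/forallP h]; [left|right]
  => i; apply/negP => /eqP e; have := h i.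
  by rewrite (ones0 (P i) e) eqxx.
by rewrite (onesn (P i) e) eqxx.
Qed.

Hypothesis hmu : (n.+1 * kappa <= mu)%N.

Lemma nontarget_cleared P y : ~~ target P ->
  exists j, CL P y (lift ord_max j) <= 0.
Proof.
move=> nt.
have [L hL] : exists L : 'I_n.+1, forall j, ones (P j) != L.
  case: (not_target_lev P nt) => h; [exists ord0 | exists ord_max]; exact: h.
case: (boolP [exists j, CL P y (lift ord_max j) <= 0]) => [/existsP//|].
rewrite negb_exists => /forallP hpos.
have hpos' : forall j, 0 < CL P y (lift ord_max j).
  by move=> j; have := hpos j; rewrite -ltNge.
exfalso.
have e1 : mu = (\sum_(j < mu) 1)%N by rewrite sum1_card card_ord.
rewrite (partition_big (fun j => inord (ones (P j)) : 'I_n.+1) predT) // in e1.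
have hb : forall k : 'I_n.+1,
   (\sum_(j < mu | true && (inord (ones (P j)) == k)) 1 <= (k != L) * kappa)%N.
  move=> k; rewrite sum1_card.
  case: (eqVneq k L) => [->|kL] /=.
    rewrite leqn0; apply/eqP; apply: eq_card0 => j; rewrite !inE.
    apply/negP => /eqP e; have := hL j.
    by rewrite -e inordK ?ltnS ?ones_le // eqxx.
  rewrite mul1n; apply: leq_trans (CL_count P y k).
  rewrite -(card_imset _ (@lift_inj _ ord_max)).
  apply: subset_leq_card; apply/subsetP => l /imsetP [j].
  rewrite !inE => /eqP hj ->.
  rewrite pstar_lift -hj inordK ?ltnS ?ones_le // eqxx /=.
  exact: hpos'.
have h2 : (\sum_(k < n.+1) \sum_(j < mu | true && (inord (ones (P j)) == k)) 1
   <= \sum_(k < n.+1) (k != L) * kappa)%N by apply: leq_sum => k _; exact: hb k.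
move: h2; rewrite -e1 (bigD1 L) //= eqxx mul0n add0n.
rewrite (eq_bigr (fun _ => kappa)); last by move=> k hkL; rewrite hkL mul1n.
rewrite sum_nat_const cardC1 card_ord /=.
move=> h; move: hmu; rewrite mulSn; lia.
Qed.

Lemma mu_gt0 : (0 < mu)%N.
Proof. by apply: leq_trans hmu; rewrite muln_gt0 hk. Qed.

Lemma worst_ne P y : exists z, z \in worst kappa u tb P y.
Proof.
pose i0 : 'I_mu := Ordinal mu_gt0.
case: (@arg_minP _ _ _ i0 predT (fun i => CL P y (lift ord_max i))) => // i _ hi.
by exists i; rewrite inE; apply/forallP => j; exact: hi.
Qed.

Lemma worst_le0 P y z : ~~ target P -> z \in worst kappa u tb P y ->
  CL P y (lift ord_max z) <= 0.
Proof.
move=> nt; rewrite inE => /forallP hz.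
have [j hj] := nontarget_cleared P y nt.
exact: le_trans (hz j) hj.
Qed.

Lemma next_notz P y z i : i != z -> next_pop kappa u tb P y z i = P i.
Proof. by move=> iz; rewrite /next_pop; case: ifP => _ //; rewrite ffunE (negbTE iz). Qed.

Lemma G1 P y z i : ~~ target P -> z \in worst kappa u tb P y ->
  exists i', ones (next_pop kappa u tb P y z i') = ones (P i).
Proof.
move=> nt zw.
case: (eqVneq (ones y) (ones (P i))) => [ey|ny].
  rewrite /next_pop; case: ifP => _; last by exists i.
  by exists z; rewrite ffunE eqxx.
have [|x [xk xp]] := CL_winner P y (ones (P i)).
  by exists (lift ord_max i); rewrite pstar_lift.
case: (unliftP ord_max x) => [i'|] ex; last first.
  by move: xk; rewrite ex pstar_max => e; rewrite e eqxx in ny.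
have iz : i' != z.
  apply/eqP => e; have := worst_le0 P y z nt zw; rewrite -e -ex.
  by rewrite leNgt xp.
by exists i'; rewrite next_notz // -xk ex pstar_lift.
Qed.

Lemma G2 P y z : ~~ target P -> z \in worst kappa u tb P y ->
  (forall i, ones (P i) != ones y) -> next_pop kappa u tb P y z z = y.
Proof.
move=> nt zw hy.
have [|x [xk xp]] := CL_winner P y (ones y).
  by exists ord_max; rewrite pstar_max.
case: (unliftP ord_max x) => [i'|] ex.
  by move: xk; rewrite ex pstar_lift => e; have := hy i'; rewrite e eqxx.
rewrite /next_pop ex in xp *.
have -> : CL P y (lift ord_max z) <= CL P y ord_max.
  exact: le_trans (worst_le0 P y z nt zw) (ltW xp).
by rewrite ffunE eqxx.
Qed.

Definition mlev (P : pop mu n) := (n - \max_(i < mu) (n - ones (P i)))%N.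
Definition Mlev (P : pop mu n) := (\max_(i < mu) ones (P i))%N.

Lemma mlev_le P i : (mlev P <= ones (P i))%N.
Proof.
rewrite /mlev.
have h := @leq_bigmax _ (fun i => (n - ones (P i))%N) i.
have := ones_le (P i); move: h; set M := bigop _ _ _; lia.
Qed.

Lemma mlev_ex P : exists i, ones (P i) = mlev P.
Proof.
pose i0 : 'I_mu := Ordinal mu_gt0.
rewrite /mlev (bigop.bigmax_eq_arg i0) //.
set a := [arg max_(_ > _ | _) _]; exists a.
have := ones_le (P a); lia.
Qed.

Lemma Mlev_le P i : (ones (P i) <= Mlev P)%N.
Proof. exact: (leq_bigmax (F := fun i => ones (P i))). Qed.

Lemma Mlev_ex P : exists i, ones (P i) = Mlev P.
Proof.
pose i0 : 'I_mu := Ordinal mu_gt0.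
rewrite /Mlev (bigop.bigmax_eq_arg i0) //.
by set a := [arg max_(_ > _ | _) _]; exists a.
Qed.

Lemma Mlev_le_n P : (Mlev P <= n)%N.
Proof. have [i <-] := Mlev_ex P; exact: ones_le. Qed.

Lemma mlev_next P y z : ~~ target P -> z \in worst kappa u tb P y ->
  (mlev (next_pop kappa u tb P y z) <= mlev P)%N /\
  ((ones y < mlev P)%N -> (mlev (next_pop kappa u tb P y z) <= ones y)%N).
Proof.
move=> nt zw; split.
  have [i hi] := mlev_ex P.
  have [i' hi'] := G1 P y z i nt zw.
  by rewrite -hi -hi'; exact: mlev_le.
move=> hy.
have hy' : forall i, ones (P i) != ones y.
  move=> i; have := mlev_le P i; apply: contraTneq => ->; by rewrite -ltnNge.
have e := G2 P y z nt zw hy'.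
rewrite -{2}e; exact: mlev_le.
Qed.

Lemma Mlev_next P y z : ~~ target P -> z \in worst kappa u tb P y ->
  (Mlev P <= Mlev (next_pop kappa u tb P y z))%N /\
  ((Mlev P < ones y)%N -> (ones y <= Mlev (next_pop kappa u tb P y z))%N).
Proof.
move=> nt zw; split.
  have [i hi] := Mlev_ex P.
  have [i' hi'] := G1 P y z i nt zw.
  by rewrite -hi -hi'; exact: Mlev_le.
move=> hy.
have hy' : forall i, ones (P i) != ones y.
  move=> i; have := Mlev_le P i; apply: contraTneq => ->; by rewrite -ltnNge.
have e := G2 P y z nt zw hy'.
rewrite -{1}e; exact: Mlev_le.
Qed.

Hypothesis hn : (2 <= n)%N.

Definition acoef : R := expR 1 * mu%:R * n%:R.
Definition Apot (k : nat) : R := \sum_(j < k) acoef / (j.+1)%:R.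
Definition gpot (P : pop mu n) : R := Apot (mlev P) + Apot (n - Mlev P).

Lemma acoef_ge0 : 0 <= acoef.
Proof. by rewrite /acoef !mulr_ge0 ?expR_ge0 ?ler0n. Qed.

Lemma Apot_S k : Apot k.+1 = Apot k + acoef / (k.+1)%:R.
Proof. by rewrite /Apot big_ord_recr. Qed.

Lemma Apot_ge0 k : 0 <= Apot k.
Proof. by apply: sumr_ge0 => j _; rewrite divr_ge0 ?acoef_ge0 ?ler0n. Qed.

Lemma Apot_mono k k' : (k <= k')%N -> Apot k <= Apot k'.
Proof.
elim: k' => [|k' IH]; first by rewrite leqn0 => /eqP ->.
rewrite leq_eqVlt => /orP[/eqP ->//|]; rewrite ltnS => /IH h.
rewrite Apot_S; apply: le_trans h _; rewrite lerDl.
by rewrite divr_ge0 ?acoef_ge0 ?ler0n.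
Qed.

Lemma Apot_drop k k' : (k' < k)%N -> Apot k' <= Apot k - acoef / k%:R.
Proof.
case: k => [//|k] hk'; rewrite Apot_S addrK; apply: Apot_mono; by rewrite -ltnS.
Qed.

Definition Dgain (P : pop mu n) (y : bits n) : R :=
  (if (ones y < mlev P)%N then acoef / (mlev P)%:R else 0) +
  (if (Mlev P < ones y)%N then acoef / (n - Mlev P)%:R else 0).

Lemma Dgain_ge0 P y : 0 <= Dgain P y.
Proof.
rewrite /Dgain; apply: addr_ge0; case: ifP => _ //;
  by rewrite divr_ge0 ?acoef_ge0 ?ler0n.
Qed.

Lemma step_bound P y z : ~~ target P -> z \in worst kappa u tb P y ->
  gpot (next_pop kappa u tb P y z) <= gpot P - Dgain P y.
Proof.
move=> nt zw.
have [m1 m2] := mlev_next P y z nt zw.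
have [M1 M2] := Mlev_next P y z nt zw.
have hA : Apot (mlev (next_pop kappa u tb P y z)) <=
          Apot (mlev P) - (if (ones y < mlev P)%N then acoef / (mlev P)%:R else 0).
  case: ifP => h; last by rewrite subr0; apply: Apot_mono.
  apply: Apot_drop; apply: leq_ltn_trans (m2 h) h.
have hB : Apot (n - Mlev (next_pop kappa u tb P y z)) <=
          Apot (n - Mlev P) - (if (Mlev P < ones y)%N then acoef / (n - Mlev P)%:R else 0).
  case: ifP => h; last by rewrite subr0; apply: Apot_mono; lia.
  apply: Apot_drop; have := ones_le y; have := M2 h; lia.
rewrite /gpot /Dgain; lra.
Qed.

Lemma trans_expect (h : pop mu n -> R) P :
  \sum_(Q : pop mu n) trans kappa u tb P Q * h Q =
  \sum_(i < mu) \sum_(y : bits n) mu%:R^-1 * mut_prob R (P i) y *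
     \sum_(z in worst kappa u tb P y)
        (#|worst kappa u tb P y|%:R^-1 * h (next_pop kappa u tb P y z)).
Proof.
rewrite /trans.
under eq_bigr do rewrite mulr_suml.
rewrite exchange_big; apply: eq_bigr => i _.
under eq_bigr do rewrite mulr_suml.
rewrite exchange_big; apply: eq_bigr => y _.
transitivity (\sum_(Q : pop mu n) (mu%:R^-1 * mut_prob R (P i) y) *
   ((\sum_(z in worst kappa u tb P y) (#|worst kappa u tb P y|%:R^-1 *
       (next_pop kappa u tb P y z == Q)%:R)) * h Q)).
  by apply: eq_bigr => Q _; exact: (esym (mulrA _ _ _)).
rewrite -[X in X = _]mulr_sumr; congr (_ * _).
under eq_bigr do rewrite mulr_suml.
rewrite exchange_big; apply: eq_bigr => z _.
rewrite (bigD1 (next_pop kappa u tb P y z)) //= eqxx mulr1 big1 ?addr0 //.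
by move=> Q; rewrite eq_sym => /negbTE ->; rewrite mulr0 mul0r.
Qed.

Lemma key_ineq k : (0 < k)%N ->
  mu%:R <= k%:R * (n%:R^-1 * (1 - n%:R^-1) ^+ n.-1) * (acoef / k%:R).
Proof.
move=> k0.
have hk0 : (k%:R : R) != 0 by rewrite pnatr_eq0 -lt0n.
have hn0 : (n%:R : R) != 0 by rewrite pnatr_eq0 -lt0n; apply: leq_trans hn.
set t := (1 - n%:R^-1) ^+ n.-1.
have ht : expR (-1) <= t := @pow_ge_expN1 R n hn.
have -> : k%:R * (n%:R^-1 * t) * (acoef / k%:R) = (t * expR 1) * mu%:R.
  rewrite /acoef; field; by rewrite hk0 hn0.
apply: ler_peMl; first exact: ler0n.
have := expRxMexpNx_1 (1 : R).
have := expR_ge0 (1 : R).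
nra.
Qed.

Lemma sum_lb_i (F : 'I_mu -> R) i : (forall j, 0 <= F j) -> F i <= \sum_j F j.
Proof.
move=> F0; rewrite (bigD1 i) //= lerDl; exact: sumr_ge0.
Qed.

Lemma gain_lb P : ~~ target P ->
  mu%:R <= \sum_(i < mu) \sum_(y : bits n) mut_prob R (P i) y * Dgain P y.
Proof.
move=> nt.
have E0 : forall i, 0 <= \sum_(y : bits n) mut_prob R (P i) y * Dgain P y.
  by move=> i; apply: sumr_ge0 => y _; rewrite mulr_ge0 ?mut_ge0 ?Dgain_ge0.
case: (posnP (mlev P)) => [m0|mpos].
  have Mn : (Mlev P < n)%N.
    rewrite ltn_neqAle Mlev_le_n andbT; apply/negP => /eqP Mn.
    move: nt; rewrite /target; apply/negP; rewrite negbK; apply/andP; split.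
      have [i hi] := mlev_ex P; apply/existsP; exists i; apply/eqP; apply: ones0.
      by rewrite hi m0.
    have [i hi] := Mlev_ex P; apply/existsP; exists i; apply/eqP; apply: onesn.
    by rewrite hi Mn.
  have [i1 hi1] := Mlev_ex P.
  apply: le_trans _ (sum_lb_i _ i1 E0).
  have hS : #|[set j | ~~ P i1 j]| = (n - Mlev P)%N.
    have hc := cardC [pred j | P i1 j]; rewrite card_ord in hc.
    rewrite -hi1 /ones -[X in (X - _)%N]hc addKn cardsE.
    by apply: eq_card => j; rewrite !inE.
  apply: le_trans (key_ineq (n - Mlev P) _) _; first by rewrite subn_gt0.
  rewrite -hS; apply: mut_lb; first exact: Dgain_ge0.
  move=> j; rewrite inE => hj; rewrite /Dgain ones_flip0 // hi1 ltnSn.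
  rewrite hS lerDr; case: ifP => _ //; by rewrite divr_ge0 ?acoef_ge0 ?ler0n.
have [i0 hi0] := mlev_ex P.
apply: le_trans _ (sum_lb_i _ i0 E0).
have hS : #|[set j | P i0 j]| = mlev P.
  by rewrite -hi0 /ones cardsE; apply: eq_card => j; rewrite !inE.
apply: le_trans (key_ineq (mlev P) mpos) _.
rewrite -hS; apply: mut_lb; first exact: Dgain_ge0.
move=> j; rewrite inE => hj.
have e := @ones_flip1 _ _ _ hj.
rewrite /Dgain hS -hi0 -e ltnSn.
rewrite lerDl; case: ifP => _ //; by rewrite divr_ge0 ?acoef_ge0 ?ler0n.
Qed.

Lemma drift P : ~~ target P ->
  \sum_(Q : pop mu n) trans kappa u tb P Q * gpot Q <= gpot P - 1.
Proof.
move=> nt; rewrite trans_expect.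
have hz : forall y,
    \sum_(z in worst kappa u tb P y)
      (#|worst kappa u tb P y|%:R^-1 * gpot (next_pop kappa u tb P y z))
    <= gpot P - Dgain P y.
  move=> y; have [z0 z0w] := worst_ne P y.
  have w0 : 0 < (#|worst kappa u tb P y|%:R : R).
    by rewrite ltr0n; apply/card_gt0P; exists z0.
  apply: le_trans (_ : _ <= \sum_(z in worst kappa u tb P y)
      (#|worst kappa u tb P y|%:R^-1 * (gpot P - Dgain P y))) _.
    apply: ler_sum => z zw; apply: ler_wpM2l; first by rewrite invr_ge0 ltW.
    exact: step_bound.
  rewrite sumr_const -mulrnAl -mulr_natr mulVf ?mul1r //; exact: lt0r_neq0.
apply: le_trans (_ : _ <= \sum_(i < mu) \sum_(y : bits n)
    mu%:R^-1 * mut_prob R (P i) y * (gpot P - Dgain P y)) _.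
  apply: ler_sum => i _; apply: ler_sum => y _; apply: ler_wpM2l (hz y).
  by rewrite mulr_ge0 ?invr_ge0 ?ler0n ?mut_ge0.
have mu0 : (mu%:R : R) != 0 by rewrite pnatr_eq0 -lt0n mu_gt0.
have e : forall i, \sum_(y : bits n) mu%:R^-1 * mut_prob R (P i) y * (gpot P - Dgain P y)
   = mu%:R^-1 * gpot P - mu%:R^-1 * \sum_(y : bits n) mut_prob R (P i) y * Dgain P y.
  move=> i.
  transitivity (\sum_(y : bits n) (mu%:R^-1 * gpot P * mut_prob R (P i) y -
                 mu%:R^-1 * (mut_prob R (P i) y * Dgain P y))).
    by apply: eq_bigr => y _; ring.
  by rewrite sumrB -mulr_sumr -mulr_sumr mut_sum1 mulr1.
under eq_bigr do rewrite e.
rewrite sumrB sumr_const card_ord -mulrnAl -mulr_natr mulVf // mul1r -mulr_sumr.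
have := gain_lb P nt.
set S := \sum_(i < mu) _.
move=> hS.
have : mu%:R^-1 * mu%:R <= mu%:R^-1 * S.
  by apply: ler_wpM2l; rewrite ?invr_ge0 ?ler0n.
rewrite mulVf //; lra.
Qed.

Lemma trans_ge0 P Q : 0 <= trans kappa u tb P Q.
Proof.
rewrite /trans; apply: sumr_ge0 => i _; apply: sumr_ge0 => y _.
apply: mulr_ge0; first by rewrite mulr_ge0 ?invr_ge0 ?ler0n ?mut_ge0.
apply: sumr_ge0 => z _; by rewrite mulr_ge0 ?invr_ge0 ?ler0n.
Qed.

Lemma init_ge0 P : 0 <= init_prob R P.
Proof. by rewrite /init_prob invr_ge0 ler0n. Qed.

Lemma surv_ge0 t Q : 0 <= surv kappa u tb t Q.
Proof.
elim: t Q => [|t IH] Q /=; case: ifP => _ //; first exact: init_ge0.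
apply: sumr_ge0 => P _; by rewrite mulr_ge0 ?IH ?trans_ge0.
Qed.

Lemma surv_target t P : target P -> surv kappa u tb t P = 0.
Proof. by case: t => [|t] /= ->. Qed.

Lemma gpot_ge0 P : 0 <= gpot P.
Proof. by rewrite /gpot addr_ge0 ?Apot_ge0. Qed.

Lemma gpot_le P : gpot P <= 2 * Apot n.
Proof.
have h1 : Apot (mlev P) <= Apot n.
  apply: Apot_mono; have [i <-] := mlev_ex P; exact: ones_le.
have h2 : Apot (n - Mlev P) <= Apot n by apply: Apot_mono; rewrite leq_subr.
rewrite /gpot; lra.
Qed.

Definition Spot t : R := \sum_(P : pop mu n) surv kappa u tb t P * gpot P.

Lemma Spot_ge0 t : 0 <= Spot t.
Proof. by apply: sumr_ge0 => P _; rewrite mulr_ge0 ?surv_ge0 ?gpot_ge0. Qed.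

Lemma Spot_step t : prob_not_yet kappa u tb t <= Spot t - Spot t.+1.
Proof.
have h1 : Spot t.+1 <= \sum_(Q : pop mu n)
    (\sum_(P : pop mu n) surv kappa u tb t P * trans kappa u tb P Q) * gpot Q.
  apply: ler_sum => Q _; apply: ler_wpM2r; first exact: gpot_ge0.
  rewrite /=; case: ifP => _ //.
  apply: sumr_ge0 => P _; by rewrite mulr_ge0 ?surv_ge0 ?trans_ge0.
have e2 : \sum_(Q : pop mu n)
    (\sum_(P : pop mu n) surv kappa u tb t P * trans kappa u tb P Q) * gpot Q =
    \sum_(P : pop mu n) surv kappa u tb t P *
       \sum_(Q : pop mu n) trans kappa u tb P Q * gpot Q.
  under eq_bigr do rewrite mulr_suml.
  rewrite exchange_big; apply: eq_bigr => P _.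
  rewrite mulr_sumr; apply: eq_bigr => Q _; by rewrite mulrA.
have h3 : \sum_(P : pop mu n) surv kappa u tb t P *
       \sum_(Q : pop mu n) trans kappa u tb P Q * gpot Q <=
    \sum_(P : pop mu n) surv kappa u tb t P * (gpot P - 1).
  apply: ler_sum => P _.
  case: (boolP (target P)) => tP; first by rewrite surv_target // !mul0r.
  by apply: ler_wpM2l; [exact: surv_ge0 | exact: drift].
have e4 : \sum_(P : pop mu n) surv kappa u tb t P * (gpot P - 1) =
    Spot t - prob_not_yet kappa u tb t.
  rewrite /Spot /prob_not_yet -sumrB; apply: eq_bigr => P _; by rewrite mulrBr mulr1.
move: h1 h3; rewrite e2 e4; lra.
Qed.

Lemma exp_le_Spot T : exp_time_partial kappa u tb T <= Spot 0.
Proof.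
suff : exp_time_partial kappa u tb T <= Spot 0 - Spot T.
  by have := Spot_ge0 T; lra.
elim: T => [|T IH]; first by rewrite /exp_time_partial big_ord0 subrr.
rewrite /exp_time_partial big_ord_recr /= -/(exp_time_partial _ _ _ T).
have := Spot_step T; lra.
Qed.

Lemma inv_nat_mul (c : nat) : (0 < c)%N -> ((c%:R : R)^-1) *+ c = 1.
Proof. by move=> c0; rewrite -(mulr_natr ((c%:R : R)^-1) c) mulVf // pnatr_eq0 -lt0n. Qed.

Lemma Spot0_le : Spot 0 <= 2 * Apot n.
Proof.
have hc : (0 < #|{: pop mu n}|)%N.
  by apply/card_gt0P; exists [ffun => zeros_str n].
apply: le_trans (_ : _ <= \sum_(P : pop mu n) init_prob R P * (2 * Apot n)) _.
  apply: ler_sum => P _; apply: le_trans (_ : _ <= init_prob R P * gpot P) _.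
    apply: ler_wpM2r; first exact: gpot_ge0.
    by rewrite /=; case: ifP => _ //; exact: init_ge0.
  by apply: ler_wpM2l; [exact: init_ge0 | exact: gpot_le].
rewrite -mulr_suml /init_prob sumr_const.
set k := #|xpredT|.
have -> : k = #|{: pop mu n}| by rewrite /k; apply: eq_card.
by rewrite inv_nat_mul ?mul1r.
Qed.

Lemma Apot_n : Apot n <= acoef * (1 + ln (n%:R : R)).
Proof.
rewrite /Apot.
under eq_bigr do rewrite mulrC.
rewrite -mulr_suml mulrC; apply: ler_wpM2l; first exact: acoef_ge0.
by apply: harm_le; apply: leq_trans hn.
Qed.

Lemma final_bound T : exp_time_partial kappa u tb T <= 2 * acoef * (1 + ln (n%:R : R)).
Proof.
apply: le_trans (exp_le_Spot T) _; apply: le_trans Spot0_le _.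
rewrite -mulrA ler_pM2l //; exact: Apot_n.
Qed.
End EA1.

Theorem lemma2 (R : realType) :
  exists (C : R) (n0 : nat), 0 < C /\
  forall (n mu kappa : nat) (u : nat -> R) (tb : sort_rule n mu),
    (n0 <= n)%N ->
    (forall i, (i <= n)%N -> 0 < u i) ->
    (0 < kappa)%N ->
    (n.+1 * kappa <= mu)%N ->
    valid_sort_rule u tb ->
    forall T : nat,
      exp_time_partial kappa u tb T <= C * mu%:R * n%:R * ln (n%:R : R).
Proof.
have l2 : 0 < ln (2 : R) by apply: ln_gt0; rewrite ltr1n.
have e0 := @expR_gt0 R 1.
exists (2 * expR 1 * (1 + (ln (2 : R))^-1)), 2%N; split.
  by rewrite !mulr_gt0 // addr_gt0 // invr_gt0.
move=> n mu kappa u tb hn hu hk hmu htb T.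
apply: le_trans (@final_bound R n mu kappa u tb hu hk htb hmu hn T) _.
have ln2n : ln (2 : R) <= ln (n%:R : R).
  have n0 : (0 < n)%N by apply: leq_trans hn.
  rewrite ler_ln ?posrE ?ltr0n ?ler_nat //.
have key : 1 + ln (n%:R : R) <= (1 + (ln (2 : R))^-1) * ln (n%:R : R).
  have : (ln (2 : R))^-1 * ln 2 <= (ln (2 : R))^-1 * ln (n%:R : R).
    by apply: ler_wpM2l => //; rewrite invr_ge0 ltW.
  rewrite mulVf ?lt0r_neq0 //; lra.
have K0 : 0 <= 2 * expR 1 * mu%:R * (n%:R : R).
  by rewrite !mulr_ge0 ?ler0n // ltW.
have := ler_wpM2l K0 key.
rewrite /acoef.
have -> : 2 * (expR 1 * mu%:R * n%:R) * (1 + ln (n%:R : R)) =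
          2 * expR 1 * mu%:R * n%:R * (1 + ln (n%:R : R)) by ring.
have -> : 2 * expR 1 * (1 + (ln (2 : R))^-1) * mu%:R * n%:R * ln (n%:R : R) =
          2 * expR 1 * mu%:R * n%:R * ((1 + (ln (2 : R))^-1) * ln (n%:R : R)) by ring.
done.
Qed.
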